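(* Let $\langle T,\le\rangle$ be a temporal flow. Then for every formula $\varphi$ and every finite set of formulas $\Gamma$, $\Gamma\vdash_{\mathrm{NM}}\varphi$ if and only if $\Gamma\models_T\varphi$.
   Context: A temporal flow is a totally ordered infinite set $\langle T,\le\rangle$. Formulas are built from a denumerable set of propositional variables and $\bot$ using $\neg$ and $\to$ (in NM, $\neg\varphi$ is $\varphi\to\bot$, and the other NM connectives $\&,\land,\vee$ are definable from $\neg,\to$). NM (Nilpotent Minimum logic) is the logic MTL (axioms: $(\varphi\to\psi)\to((\psi\to\chi)\to(\varphi\to\chi))$; $(\varphi\&\psi)\to\varphi$; $(\varphi\&\psi)\to(\psi\&\varphi)$; $(\varphi\land\psi)\to\varphi$; $(\varphi\land\psi)\to(\psi\land\varphi)$; $(\varphi\&(\varphi\to\psi))\to(\psi\land\varphi)$; $(\varphi\to(\psi\to\chi))\to((\varphi\&\psi)\to\chi)$; $((\varphi\&\psi)\to\chi)\to(\varphi\to(\psi\to\chi))$; $((\varphi\to\psi)\to\chi)\to(((\psi\to\varphi)\to\chi)\to\chi)$; $\bot\to\varphi$; rule modus ponens) extended by $\neg\neg\varphi\to\varphi$ and $\neg(\varphi\&\psi)\vee((\varphi\land\psi)\to(\varphi\&\psi))$, where $\varphi\vee\psi$ is $((\varphi\to\psi)\to\psi)\land((\psi\to\varphi)\to\varphi)$. Let $T'=T\cup\{-\infty\}$ and $T''=(T'\times\{0,1\})\cup\{\langle-\infty,\frac12\rangle\}$, totally ordered by: for $t<t'$ in $T$, $\langle-\infty,0\rangle<\langle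 t,0\rangle<\langle t',0\rangle<\langle-\infty,\frac12\rangle<\langle t',1\rangle<\langle t,1\rangle<\langle-\infty,1\rangle$. A function $f:T\to\{0,\frac12,1\}$ is admissible if it is constant, or there exist $i\in\{0,1\}$ and $t\in T$ (not the minimum of $T$, if $T$ has one) with $f(t')=i$ for $t'\ge t$ and $f(t'')=\frac12$ for $t''<t$; set $d(f)=\langle-\infty,c\rangle$ if $f$ is constant with value $c$, and $d(f)=\langle t,i\rangle$ in the second case. A temporal assignment is $v:VAR\times T\to\{0,\frac12,1\}$ with every $v(x,\cdot)$ admissible. The map $s^v$ from formulas to $T''$ is: $s^v(x)=d(v(x,\cdot))$; $s^v(\bot)=\langle-\infty,0\rangle$; if $s^v(\varphi)=\langle a,m\rangle$ then $s^v(\neg\varphi)=\langle a,1-m\rangle$; $s^v(\varphi\to\psi)=\langle-\infty,1\rangle$ if $s^v(\varphi)\le s^v(\psi)$, else the maximum of $s^v(\neg\varphi)$ and $s^v(\psi)$ in $T''$. $\Gamma\models_T\varphi$ means: for every temporal assignment $v$ on $T$ with $s^v(\psi)=\langle-\infty,1\rangle$ for all $\psi\in\Gamma$, also $s^v(\varphi)=\langle-\infty,1\rangle$. *)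

(* Defs.v *)
From Stdlib Require Import List Classical ClassicalEpsilon.
Import ListNotations.

Inductive formula : Type :=
| Var : nat -> formula
| Bot : formula
| Imp : formula -> formula -> formula.

Definition Neg (a : formula) : formula := Imp a Bot.
Definition SConj (a b : formula) : formula := Neg (Imp a (Neg b)).
(** weak conjunction (lattice meet), definable in NM from ~ and -> *)
Definition WConj (a b : formula) : formula :=
  let A := Imp (Imp a b) (Neg a) in
  let B := Imp (Imp b a) (Neg b) in
  Imp (Imp A B) (Neg A).
Definition Disj (a b : formula) : formula :=
  WConj (Imp (Imp a b) b) (Imp (Imp b a) a).

Inductive NM_axiom : formula -> Prop :=
| ax1 p q r : NM_axiom (Imp (Imp p q) (Imp (Imp q r) (Imp p r)))
| ax2 p q : NM_axiom (Imp (SConj p q) p)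
| ax3 p q : NM_axiom (Imp (SConj p q) (SConj q p))
| ax4 p q : NM_axiom (Imp (WConj p q) p)
| ax5 p q : NM_axiom (Imp (WConj p q) (WConj q p))
| ax6 p q : NM_axiom (Imp (SConj p (Imp p q)) (WConj q p))
| ax7 p q r : NM_axiom (Imp (Imp p (Imp q r)) (Imp (SConj p q) r))
| ax8 p q r : NM_axiom (Imp (Imp (SConj p q) r) (Imp p (Imp q r)))
| ax9 p q r : NM_axiom (Imp (Imp (Imp p q) r) (Imp (Imp (Imp q p) r) r))
| ax10 p : NM_axiom (Imp Bot p)
| axInv p : NM_axiom (Imp (Neg (Neg p)) p)
| axNM p q : NM_axiom (Disj (Neg (SConj p q)) (Imp (WConj p q) (SConj p q))).

Inductive NM_derives (Gamma : list formula) : formula -> Prop :=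
| d_ax phi : NM_axiom phi -> NM_derives Gamma phi
| d_hyp phi : In phi Gamma -> NM_derives Gamma phi
| d_mp phi psi : NM_derives Gamma phi -> NM_derives Gamma (Imp phi psi) ->
                 NM_derives Gamma psi.

Definition temporal_flow {T : Type} (le : T -> T -> Prop) : Prop :=
  (forall x, le x x) /\
  (forall x y, le x y -> le y x -> x = y) /\
  (forall x y z, le x y -> le y z -> le x z) /\
  (forall x y, le x y \/ le y x) /\
  ~ (exists l : list T, forall t, In t l).

Inductive V3 : Type := V0 | Vhalf | V1.

(** T'' = (T' x {0,1}) U {<-oo,1/2>}, with T' = T U {-oo}; [None] is -oo,
    the boolean is the second component (false = 0, true = 1). *)
Inductive T2 (T : Type) : Type :=
| Pt : option T -> bool -> T2 T
| MinfHalf : T2 T.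
Arguments Pt {T}.
Arguments MinfHalf {T}.

Section Sem.
Context {T : Type} (le : T -> T -> Prop).

Definition lt (x y : T) : Prop := le x y /\ x <> y.

Definition leT' (a b : option T) : Prop :=
  match a, b with
  | None, _ => True
  | Some _, None => False
  | Some x, Some y => le x y
  end.

Definition leT2 (p q : T2 T) : Prop :=
  match p, q with
  | Pt a false, Pt b false => leT' a b
  | Pt _ false, _ => True
  | MinfHalf, Pt _ false => False
  | MinfHalf, _ => True
  | Pt a true, Pt b true => leT' b a
  | Pt _ true, _ => False
  end.

Definition negT2 (p : T2 T) : T2 T :=
  match p with
  | Pt a m => Pt a (negb m)
  | MinfHalf => MinfHalf
  end.

Definition maxT2 (p q : T2 T) : T2 T :=
  if excluded_middle_informative (leT2 p q) then q else p.

Definition topT2 : T2 T := Pt None true.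
Definition botT2 : T2 T := Pt None false.

Definition is_min (t : T) : Prop := forall u, le t u.

Definition admissible (f : T -> V3) : Prop :=
  (exists c, forall t, f t = c) \/
  (exists i t, (i = V0 \/ i = V1) /\ ~ is_min t /\
     (forall t', le t t' -> f t' = i) /\
     (forall t'', lt t'' t -> f t'' = Vhalf)).

Definition const_T2 (c : V3) : T2 T :=
  match c with V0 => Pt None false | Vhalf => MinfHalf | V1 => Pt None true end.

Definition step_prop (f : T -> V3) (p : V3 * T) : Prop :=
  (fst p = V0 \/ fst p = V1) /\ ~ is_min (snd p) /\
  (forall t', le (snd p) t' -> f t' = fst p) /\
  (forall t'', lt t'' (snd p) -> f t'' = Vhalf).

Definition d (f : T -> V3) : T2 T :=
  match excluded_middle_informative (exists c, forall t, f t = c) with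
  | left H => const_T2 (proj1_sig (constructive_indefinite_description _ H))
  | right _ =>
      match excluded_middle_informative (exists p, step_prop f p) with
      | left H =>
          let p := proj1_sig (constructive_indefinite_description _ H) in
          Pt (Some (snd p)) (match fst p with V1 => true | _ => false end)
      | right _ => MinfHalf (* unreachable for admissible f *)
      end
  end.

Definition temporal_assignment (v : nat -> T -> V3) : Prop :=
  forall x, admissible (v x).

(** s^v ; the clause for negation s^v(~phi) = <a,1-m> follows from the
    implication clause since ~phi is phi -> bot. *)
Fixpoint sv (v : nat -> T -> V3) (phi : formula) : T2 T :=
  match phi with
  | Var x => d (v x)
  | Bot => botT2
  | Imp a b =>
      let sa := sv v a in
      let sb := sv v b in
      if excluded_middle_informative (leT2 sa sb) then topT2
      else maxT2 (negT2 sa) sb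
  end.

Definition models (Gamma : list formula) (phi : formula) : Prop :=
  forall v, temporal_assignment v ->
    (forall psi, In psi Gamma -> sv v psi = topT2) -> sv v phi = topT2.

End Sem.

(* Main.v *)
Require Import Defs.
From Stdlib Require Import List Classical ClassicalEpsilon Arith Lia ZArith.
Import ListNotations.

Definition Top : formula := Imp Bot Bot.

Section Hilb.
Variable D0 : list formula.
Notation D := (NM_derives D0).
Definition LE a b := D (Imp a b).

Lemma Dax a : NM_axiom a -> D a. Proof. apply d_ax. Qed.
Lemma Dmp a b : D a -> D (Imp a b) -> D b. Proof. intros H1 H2; eapply d_mp; [exact H1|exact H2]. Qed.
Lemma axle a b : NM_axiom (Imp a b) -> LE a b. Proof. apply d_ax. Qed.

Lemma le_trans a b c : LE a b -> LE b c -> LE a c.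
Proof. unfold LE; intros H1 H2. eapply Dmp. exact H2. eapply Dmp. exact H1. apply Dax, ax1. Qed.
Lemma res1 p q r : LE p (Imp q r) -> LE (SConj p q) r.
Proof. unfold LE; intros H. eapply Dmp. exact H. apply Dax, ax7. Qed.
Lemma res2 p q r : LE (SConj p q) r -> LE p (Imp q r).
Proof. unfold LE; intros H. eapply Dmp. exact H. apply Dax, ax8. Qed.
Lemma sc_l p q : LE (SConj p q) p. Proof. apply axle, ax2. Qed.
Lemma sc_comm p q : LE (SConj p q) (SConj q p). Proof. apply axle, ax3. Qed.
Lemma DTop : D Top. Proof. apply Dax, ax10. Qed.
Lemma le_bot a : LE Bot a. Proof. apply axle, ax10. Qed.
Lemma topD x : LE Top x -> D x. Proof. intros H; eapply Dmp; [apply DTop|exact H]. Qed.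
Lemma le_refl a : LE a a.
Proof. apply topD, res2. eapply le_trans. apply sc_comm. apply sc_l. Qed.
Lemma Dtop x : D x -> LE Top x.
Proof. intros H. eapply Dmp. exact H. apply res2, sc_l. Qed.
Lemma weak a b : LE b (Imp a b). Proof. apply res2, sc_l. Qed.
Lemma le_top a : LE a Top. Proof. apply res2. eapply le_trans. apply sc_comm. apply sc_l. Qed.
Lemma mpl a b : LE (SConj a (Imp a b)) b.
Proof. eapply le_trans. apply sc_comm. apply res1, le_refl. Qed.
Lemma mpl2 y z : D y -> LE (Imp y z) z.
Proof. intros H. eapply Dmp. exact H. apply res2, mpl. Qed.
Lemma sc_mono_r x y z : LE x y -> LE (SConj z x) (SConj z y).
Proof.
  intros H. eapply le_trans. apply sc_comm. apply res1.
  eapply le_trans. exact H. apply res2, sc_comm.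
Qed.
Lemma sc_mono_l x y z : LE x y -> LE (SConj x z) (SConj y z).
Proof.
  intros H. eapply le_trans. apply sc_comm. eapply le_trans. apply sc_mono_r, H. apply sc_comm.
Qed.
Lemma sc_Dr z x : D x -> LE z (SConj z x).
Proof. intros H. eapply le_trans. apply res2, le_refl. apply mpl2, H. Qed.
Lemma sc_assoc a b c : LE (SConj a (SConj b c)) (SConj (SConj a b) c).
Proof.
  apply res1. eapply le_trans. apply res2, res2, le_refl. apply axle, ax7.
Qed.
Lemma nn_i a : LE a (Neg (Neg a)). Proof. apply res2, mpl. Qed.
Lemma nn_e a : LE (Neg (Neg a)) a. Proof. apply axle, axInv. Qed.
Lemma contra a b : LE a b -> LE (Neg b) (Neg a).
Proof. unfold LE; intros H. eapply Dmp. exact H. apply Dax, ax1. Qed.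
Lemma wc_l p q : LE (WConj p q) p. Proof. apply axle, ax4. Qed.
Lemma wc_comm p q : LE (WConj p q) (WConj q p). Proof. apply axle, ax5. Qed.
Lemma wc_glb p q : LE (SConj p (Imp p q)) (WConj q p). Proof. apply axle, ax6. Qed.
Lemma disj_elim u v : D (Disj u v) -> LE u v \/ LE v u -> D u \/ D v.
Proof.
  intros H [H1|H1].
  - right. eapply Dmp. exact H1. eapply Dmp. exact H. apply wc_l.
  - left. eapply Dmp. exact H1. eapply Dmp. exact H. eapply le_trans. apply wc_comm. apply wc_l.
Qed.
Lemma ax9r p q r : D (Imp (Imp p q) r) -> D (Imp (Imp q p) r) -> D r.
Proof. intros H1 H2. eapply Dmp. exact H2. eapply Dmp. exact H1. apply Dax, ax9. Qed.

Lemma chain_imp a b :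
  let z := Imp a b in
  let u := Neg (SConj a z) in
  let v := Imp (WConj a z) (SConj a z) in
  (LE a z \/ LE z a) -> (LE u v \/ LE v u) -> ~ LE a b ->
  LE z b \/ LE z (Neg a).
Proof.
  intros z u v Paz Puv Nab.
  assert (Haz : LE (SConj a z) b).
  { eapply le_trans. apply sc_comm. apply res1, le_refl. }
  destruct (disj_elim u v (Dax _ (axNM a z)) Puv) as [Hu|Hv].
  - right. apply res2. eapply le_trans. apply sc_comm. exact Hu.
  - destruct Paz as [H|H].
    + exfalso. apply Nab. eapply le_trans. 2: exact Haz.
      eapply le_trans. apply (sc_Dr a (Imp a z)), H.
      eapply le_trans. apply wc_glb. eapply le_trans. apply wc_comm. exact Hv.
    + left. eapply le_trans. apply (sc_Dr z (Imp z a)), H.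
      eapply le_trans. apply wc_glb. eapply le_trans. exact Hv. exact Haz.
Qed.
End Hilb.
Fixpoint pw (x : formula) (n : nat) : formula :=
  match n with 0 => Top | S n => SConj x (pw x n) end.

Lemma der_mono D1 D2 a : NM_derives D1 a -> incl D1 D2 -> NM_derives D2 a.
Proof.
  intros H Hi; induction H.
  - apply d_ax; auto.
  - apply d_hyp; auto.
  - eapply d_mp; [exact IHNM_derives1|exact IHNM_derives2].
Qed.

Lemma pw_add D0 h m n : LE D0 (pw h (m + n)) (SConj (pw h m) (pw h n)).
Proof.
  induction m; simpl.
  - eapply le_trans. apply (sc_Dr _ _ Top), DTop. apply sc_comm.
  - eapply le_trans. apply sc_mono_r, IHm. apply sc_assoc.
Qed.

Lemma DT D0 h a : NM_derives (D0 ++ [h]) a -> exists n, LE D0 (pw h n) a.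
Proof.
  intros H; induction H as [a Ha|a Ha|a b _ [n IH1] _ [m IH2]].
  - exists 0. apply Dtop, d_ax, Ha.
  - apply in_app_or in Ha; destruct Ha as [Ha|[Ha|[]]].
    + exists 0. apply Dtop, d_hyp, Ha.
    + subst. exists 1. apply sc_l.
  - exists (m + n). eapply le_trans. apply pw_add.
    eapply le_trans. apply sc_mono_l, IH2. eapply le_trans. apply sc_mono_r, IH1.
    eapply le_trans. apply sc_comm. apply mpl.
Qed.

Lemma KL D0 p q : forall n m r, LE D0 (pw (Imp p q) n) r -> LE D0 (pw (Imp q p) m) r ->
  NM_derives D0 r.
Proof.
  induction n as [|n IHn]; intros m r H1 H2.
  - apply topD, H1.
  - revert r H1 H2; induction m as [|m IHm]; intros r H1 H2.
    + apply topD, H2.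
    + apply (ax9r _ p q).
      * apply (IHn (S m)).
        -- apply res2. eapply le_trans. apply sc_comm. exact H1.
        -- apply res2. eapply le_trans. apply sc_l. exact H2.
      * apply IHm.
        -- apply res2. eapply le_trans. apply sc_l. exact H1.
        -- apply res2. eapply le_trans. apply sc_comm. exact H2.
Qed.

Lemma split_case D0 p q a : NM_derives (D0 ++ [Imp p q]) a -> NM_derives (D0 ++ [Imp q p]) a ->
  NM_derives D0 a.
Proof.
  intros H1 H2. destruct (DT _ _ _ H1) as [n Hn]. destruct (DT _ _ _ H2) as [m Hm].
  eapply KL; eauto.
Qed.

Lemma prime_ext (L : list (formula * formula)) : forall D0 a, ~ NM_derives D0 a ->
  exists C, ~ NM_derives (D0 ++ C) a /\
    forall p q, In (p, q) L -> LE (D0 ++ C) p q \/ LE (D0 ++ C) q p.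
Proof.
  induction L as [|[p q] L IH]; intros D0 a Ha.
  - exists []. rewrite app_nil_r. split; auto. intros ? ? [].
  - assert (exists x, (x = Imp p q \/ x = Imp q p) /\ ~ NM_derives (D0 ++ [x]) a) as [x [Hx1 Hx2]].
    { destruct (classic (NM_derives (D0 ++ [Imp p q]) a)) as [H1|H1].
      - destruct (classic (NM_derives (D0 ++ [Imp q p]) a)) as [H2|H2].
        + exfalso; apply Ha; eapply split_case; eauto.
        + eauto.
      - eauto. }
    destruct (IH _ _ Hx2) as [C [HC1 HC2]].
    exists (x :: C). rewrite <- app_assoc in HC1. simpl in HC1. split; auto.
    intros p' q' [E|Hin].
    + inversion E; subst. unfold LE.
      destruct Hx1; subst; [left|right]; apply d_hyp; apply in_or_app; simpl; auto.
    + specialize (HC2 _ _ Hin). rewrite <- app_assoc in HC2. exact HC2.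
Qed.
Open Scope Z_scope.

Fixpoint subf (f : formula) : list formula :=
  f :: match f with Imp a b => subf a ++ subf b | _ => [] end.

Lemma subf_closed f a b : In (Imp a b) (subf f) -> In a (subf f) /\ In b (subf f).
Proof.
  induction f; simpl; intros H; destruct H as [H|H]; try discriminate; try contradiction.
  - inversion H; subst. split; right; apply in_or_app; [left|right]; destruct a, b; simpl; auto.
  - apply in_app_or in H. destruct H as [H|H].
    + destruct (IHf1 H); split; right; apply in_or_app; auto.
    + destruct (IHf2 H); split; right; apply in_or_app; auto.
Qed.

Definition impZ (M z w : Z) : Z := if z <=? w then M else Z.max (- z) w.

Section Rank.
Variable D0 : list formula.
Variable B : list formula.
Definition leb (y x : formula) : bool :=
  if excluded_middle_informative (LE D0 y x) then true else false.
Definition rk (x : formula) : Z := Z.of_nat (length (filter (fun y => leb y x) B)).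
Definition vv (x : formula) : Z := rk x - rk (Neg x).

Lemma filter_mono (f g : formula -> bool) l :
  (forall y, f y = true -> g y = true) -> (length (filter f l) <= length (filter g l))%nat.
Proof.
  intros H; induction l; simpl; auto.
  destruct (f a) eqn:E1; [rewrite (H _ E1); simpl; lia|destruct (g a); simpl; lia].
Qed.
Lemma filter_strict (f g : formula -> bool) l y :
  (forall y, f y = true -> g y = true) -> In y l -> g y = true -> f y = false ->
  (length (filter f l) < length (filter g l))%nat.
Proof.
  intros H Hy Hg Hf; induction l; simpl; [destruct Hy|].
  destruct Hy as [<-|Hy].
  - rewrite Hf, Hg; simpl. pose proof (filter_mono f g l H). lia.
  - destruct (f a) eqn:E1; [rewrite (H _ E1); simpl; specialize (IHl Hy); lia|].
    destruct (g a); simpl; specialize (IHl Hy); lia.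
Qed.

Lemma leb_true y x : leb y x = true <-> LE D0 y x.
Proof. unfold leb; destruct excluded_middle_informative; split; auto; discriminate. Qed.

Lemma rk_mono x y : LE D0 x y -> rk x <= rk y.
Proof.
  intros H; unfold rk. apply inj_le. apply filter_mono. intros z Hz.
  apply leb_true in Hz. apply leb_true. eapply le_trans; eauto.
Qed.
Lemma vv_mono x y : LE D0 x y -> vv x <= vv y.
Proof.
  intros H; unfold vv. pose proof (rk_mono _ _ H). pose proof (rk_mono _ _ (contra _ _ _ H)). lia.
Qed.
Lemma vv_strict x y : In x B -> LE D0 y x -> ~ LE D0 x y -> vv y < vv x.
Proof.
  intros Hx H1 H2. unfold vv. pose proof (rk_mono _ _ (contra _ _ _ H1)).
  assert (rk y < rk x). { unfold rk. apply inj_lt. apply (filter_strict _ _ _ x).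
    - intros z Hz. apply leb_true in Hz. apply leb_true. eapply le_trans; eauto.
    - exact Hx.
    - apply leb_true, le_refl.
    - destruct (leb x y) eqn:E; auto. apply leb_true in E. contradiction. }
  lia.
Qed.
Lemma vv_eq x y : LE D0 x y -> LE D0 y x -> vv x = vv y.
Proof. intros H1 H2. pose proof (vv_mono _ _ H1). pose proof (vv_mono _ _ H2). lia. Qed.
Lemma vv_neg x : vv (Neg x) = - vv x.
Proof.
  unfold vv. assert (rk (Neg (Neg x)) = rk x).
  { pose proof (rk_mono _ _ (nn_i D0 x)). pose proof (rk_mono _ _ (nn_e D0 x)). lia. }
  lia.
Qed.
Definition MM := vv Top.
Lemma vv_le_M x : vv x <= MM. Proof. apply vv_mono, le_top. Qed.
Lemma vv_bot : vv Bot = - MM.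
Proof.
  unfold MM. rewrite <- vv_neg. apply vv_eq. apply le_bot. apply mpl2, DTop.
Qed.
Lemma vv_ge_M x : - MM <= vv x. Proof. rewrite <- vv_bot. apply vv_mono, le_bot. Qed.
Lemma vv_top_D x : In Top B -> vv x = MM -> NM_derives D0 x.
Proof.
  intros HT H. destruct (classic (LE D0 Top x)) as [H1|H1]. apply topD, H1.
  exfalso. pose proof (vv_strict Top x HT (le_top _ _) H1). unfold MM in H. lia.
Qed.
Lemma D_vv_top x : NM_derives D0 x -> vv x = MM.
Proof. intros H. pose proof (vv_mono _ _ (Dtop _ _ H)). pose proof (vv_le_M x). unfold MM in *. lia. Qed.

Lemma neg_le_imp a b : LE D0 (Neg a) (Imp a b).
Proof. apply res2. eapply le_trans. apply sc_comm. eapply le_trans. apply mpl. apply le_bot. Qed.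

Lemma vv_imp a b :
  let z := Imp a b in
  let u := Neg (SConj a z) in
  let v := Imp (WConj a z) (SConj a z) in
  In a B -> (LE D0 a b \/ LE D0 b a) -> (LE D0 a z \/ LE D0 z a) -> (LE D0 u v \/ LE D0 v u) ->
  vv (Imp a b) = impZ MM (vv a) (vv b).
Proof.
  intros z u v Ha Pab Paz Puv. unfold impZ.
  destruct (classic (LE D0 a b)) as [H|H].
  - rewrite (proj2 (Z.leb_le _ _) (vv_mono _ _ H)). apply D_vv_top, H.
  - assert (Hba : LE D0 b a) by (destruct Pab; tauto).
    pose proof (vv_strict _ _ Ha Hba H).
    rewrite (proj2 (Z.leb_gt _ _) H0).
    destruct (chain_imp D0 a b Paz Puv H) as [H1|H1].
    + assert (E : vv z = vv b) by (apply vv_eq; [exact H1| apply weak]).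
      pose proof (vv_mono _ _ (le_trans _ _ _ _ (neg_le_imp a b) H1)). rewrite vv_neg in H2.
      unfold z in E. rewrite E. lia.
    + assert (E : vv z = vv (Neg a)) by (apply vv_eq; [exact H1| apply neg_le_imp]).
      pose proof (vv_mono _ _ (le_trans _ _ _ _ (weak _ a b) H1)). rewrite vv_neg in *.
      unfold z in E. rewrite E. lia.
Qed.
End Rank.
From Stdlib Require Import Sorting.Sorted.

Section TSide.
Variable T : Type.
Variable le : T -> T -> Prop.
Hypothesis Hflow : temporal_flow le.

Lemma le_refl' x : le x x. Proof. apply Hflow. Qed.
Lemma le_antisym x y : le x y -> le y x -> x = y. Proof. apply Hflow. Qed.
Lemma le_trans' x y z : le x y -> le y z -> le x z. Proof. apply Hflow. Qed.
Lemma le_total x y : le x y \/ le y x. Proof. apply Hflow. Qed.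
Lemma infin : forall l : list T, exists t, ~ In t l.
Proof.
  intros l. destruct Hflow as (_&_&_&_&H). apply not_all_ex_not. intros H'. apply H; eauto.
Qed.
Lemma inhabT : inhabited T. Proof. destruct (infin []) as [t _]; constructor; exact t. Qed.

Lemma lt_trans x y z : lt le x y -> lt le y z -> lt le x z.
Proof.
  intros [H1 H2] [H3 H4]. split. eapply le_trans'; eauto.
  intros ->. apply H2, le_antisym; auto.
Qed.

Fixpoint ins (t : T) (l : list T) : list T :=
  match l with
  | [] => [t]
  | x :: l' => if excluded_middle_informative (le t x) then t :: x :: l' else x :: ins t l'
  end.
Lemma ins_in t l y : In y (ins t l) -> y = t \/ In y l.
Proof.
  induction l; simpl; [intuition|].
  destruct excluded_middle_informative; simpl; intros [H|H]; auto.
  destruct (IHl H); auto.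
Qed.
Lemma ins_len t l : length (ins t l) = S (length l).
Proof. induction l; simpl; auto. destruct excluded_middle_informative; simpl; auto. Qed.
Lemma ins_sorted t l : StronglySorted (lt le) l -> ~ In t l -> StronglySorted (lt le) (ins t l).
Proof.
  induction l; intros Hs Hn; simpl. repeat constructor.
  inversion Hs as [|? ? Hs' H3]; subst.
  destruct excluded_middle_informative as [H|H].
  - assert (lt le t a) by (split; auto; intros ->; apply Hn; left; auto).
    constructor. exact Hs. constructor. assumption.
    eapply Forall_impl. 2: exact H3. intros y Hy. eapply lt_trans; eauto.
  - assert (lt le a t).
    { split. destruct (le_total t a); tauto. intros ->; apply Hn; left; auto. }
    constructor. apply IHl; auto. intros Hi; apply Hn; right; auto.
    apply Forall_forall. intros y Hy. destruct (ins_in _ _ _ Hy) as [->|Hy']; auto.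
    rewrite Forall_forall in H3; auto.
Qed.
Lemma sorted_exists n : exists l, StronglySorted (lt le) l /\ length l = n.
Proof.
  induction n as [|n [l [H1 H2]]]. exists []; split; auto; constructor.
  destruct (infin l) as [t Ht]. exists (ins t l). split. apply ins_sorted; auto.
  rewrite ins_len; auto.
Qed.
Lemma sorted_nth l d i j : StronglySorted (lt le) l -> (i < j < length l)%nat ->
  lt le (nth i l d) (nth j l d).
Proof.
  revert i j; induction l; simpl; intros i j Hs Hij. lia.
  inversion Hs as [|? ? Hs' H2]; subst. destruct i, j; try lia.
  - simpl. rewrite Forall_forall in H2. apply H2. apply nth_In. lia.
  - simpl. apply IHl; auto. lia.
Qed.
Lemma g_exists (K : nat) : exists g : nat -> T, forall i j, (i < j <= K)%nat -> lt le (g i) (g j).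
Proof.
  destruct (sorted_exists (S K)) as [l [H1 H2]]. destruct inhabT as [t0].
  exists (fun i => nth i l t0). intros i j Hij. apply sorted_nth; auto. lia.
Qed.

Definition impT2 (x y : T2 T) : T2 T :=
  if excluded_middle_informative (leT2 le x y) then topT2 else maxT2 le (negT2 x) y.

Lemma sv_imp v a b : sv le v (Imp a b) = impT2 (sv le v a) (sv le v b).
Proof. reflexivity. Qed.

Section Phi.
Variable g : nat -> T.
Variable M : Z.
Hypothesis HM : 0 < M.
Hypothesis Hg : forall i j, (i < j <= Z.to_nat (2 * M))%nat -> lt le (g i) (g j).

Definition phiZ (z : Z) : T2 T :=
  if z =? M then Pt None true else if z =? - M then Pt None false else if z =? 0 then MinfHalf
  else if z <? 0 then Pt (Some (g (Z.to_nat (z + M)))) false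
  else Pt (Some (g (Z.to_nat (M - z)))) true.

Lemma g_le i j : (i <= j <= Z.to_nat (2 * M))%nat -> le (g i) (g j).
Proof. intros H. destruct (Nat.eq_dec i j). subst; apply le_refl'. apply Hg; lia. Qed.
Lemma g_nle i j : (i < j <= Z.to_nat (2 * M))%nat -> ~ le (g j) (g i).
Proof. intros H H'. destruct (Hg i j H) as [H1 H2]. apply H2, le_antisym; auto. Qed.

Lemma phi_le z w : -M <= z <= M -> -M <= w <= M -> (leT2 le (phiZ z) (phiZ w) <-> z <= w).
Proof.
  intros Hz Hw. unfold phiZ.
  destruct (Z.eqb_spec z M); destruct (Z.eqb_spec w M); try (simpl; split; intros; try lia; tauto);
  destruct (Z.eqb_spec z (-M)); destruct (Z.eqb_spec w (-M)); try (simpl; split; intros; try lia; tauto);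
  destruct (Z.eqb_spec z 0); destruct (Z.eqb_spec w 0); try (simpl; split; intros; try lia; tauto);
  destruct (Z.ltb_spec z 0); destruct (Z.ltb_spec w 0); try (simpl; split; intros; try lia; tauto).
  all: simpl; split; intros HH;
    [destruct (Z_le_gt_dec z w) as [?|Hgt]; auto; exfalso; eapply g_nle; [|exact HH]; lia
    |apply g_le; lia].
Qed.

Lemma phi_neg z : -M <= z <= M -> negT2 (phiZ z) = phiZ (- z).
Proof.
  intros Hz. unfold phiZ.
  destruct (Z.eqb_spec z M); destruct (Z.eqb_spec (-z) M); try lia;
  destruct (Z.eqb_spec z (-M)); destruct (Z.eqb_spec (-z) (-M)); try lia;
  destruct (Z.eqb_spec z 0); destruct (Z.eqb_spec (-z) 0); try lia;
  destruct (Z.ltb_spec z 0); destruct (Z.ltb_spec (-z) 0); try lia; simpl; auto.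
  - f_equal. f_equal. f_equal. lia.
  - f_equal. f_equal. f_equal. lia.
Qed.

Lemma phi_top z : -M <= z <= M -> phiZ z = topT2 -> z = M.
Proof.
  intros Hz. unfold phiZ, topT2.
  destruct (Z.eqb_spec z M); auto; destruct (Z.eqb_spec z (-M)); try discriminate;
  destruct (Z.eqb_spec z 0); try discriminate; destruct (Z.ltb_spec z 0); discriminate.
Qed.
Lemma phi_M : phiZ M = topT2. Proof. unfold phiZ. rewrite Z.eqb_refl. reflexivity. Qed.
Lemma phi_mM : phiZ (-M) = botT2.
Proof. unfold phiZ. destruct (Z.eqb_spec (-M) M); try lia. rewrite Z.eqb_refl. reflexivity. Qed.

Lemma phi_imp z w : -M <= z <= M -> -M <= w <= M ->
  impT2 (phiZ z) (phiZ w) = phiZ (impZ M z w).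
Proof.
  intros Hz Hw. unfold impT2, impZ, maxT2.
  destruct excluded_middle_informative as [H|H].
  - apply phi_le in H; auto. rewrite (proj2 (Z.leb_le _ _) H). symmetry; apply phi_M.
  - rewrite phi_le in H; auto. rewrite (proj2 (Z.leb_gt _ _)) by lia.
    rewrite phi_neg; auto.
    destruct excluded_middle_informative as [H'|H']; rewrite phi_le in H' by lia; f_equal; lia.
Qed.

Lemma phi_good z : -M <= z <= M ->
  (exists b, phiZ z = Pt None b) \/ phiZ z = MinfHalf \/
  (exists t b, phiZ z = Pt (Some t) b /\ ~ is_min le t).
Proof.
  intros Hz. unfold phiZ.
  destruct (Z.eqb_spec z M); eauto; destruct (Z.eqb_spec z (-M)); eauto;
  destruct (Z.eqb_spec z 0); eauto; destruct (Z.ltb_spec z 0); right; right; (eexists; eexists; split; [reflexivity|]);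
  intros Hm; (eapply (g_nle 0); [|apply Hm]); lia.
Qed.
End Phi.

Definition realize (p : T2 T) : T -> V3 :=
  match p with
  | Pt None false => fun _ => V0
  | Pt None true => fun _ => V1
  | MinfHalf => fun _ => Vhalf
  | Pt (Some t) b => fun t' => if excluded_middle_informative (le t t') then (if b then V1 else V0) else Vhalf
  end.

Lemma d_const (f : T -> V3) c : (forall t, f t = c) -> d le f = const_T2 c.
Proof.
  intros H. unfold d. destruct excluded_middle_informative as [H1|H1].
  - destruct constructive_indefinite_description as [c' Hc']. simpl.
    destruct inhabT as [t0]. rewrite <- (H t0), <- (Hc' t0). reflexivity.
  - exfalso; eauto.
Qed.

Lemma realize_ok p :
  ((exists b, p = Pt None b) \/ p = MinfHalf \/ (exists t b, p = Pt (Some t) b /\ ~ is_min le t)) ->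
  admissible le (realize p) /\ d le (realize p) = p.
Proof.
  intros [[b ->]|[->|[t [b [-> Ht]]]]].
  - destruct b; simpl; (split; [left; eauto|]); erewrite d_const; eauto; reflexivity.
  - simpl; (split; [left; eauto|]); erewrite d_const; eauto; reflexivity.
  - set (i := if b then V1 else V0).
    assert (Hs : step_prop le (realize (Pt (Some t) b)) (i, t)).
    { unfold step_prop; simpl. split. destruct b; auto. split; auto. split.
      - intros t' H. destruct excluded_middle_informative; tauto.
      - intros t'' [H1 H2]. destruct excluded_middle_informative; auto.
        exfalso; apply H2, le_antisym; auto. }
    split. { right. exists i, t. exact Hs. }
    unfold d. destruct excluded_middle_informative as [H1|H1].
    + exfalso. destruct H1 as [c Hc]. apply Ht. intros u. destruct (le_total t u); auto.
      destruct (classic (le t u)); auto. exfalso.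
      pose proof (Hc u) as Hu. pose proof (Hc t) as Htt. simpl in Hu, Htt.
      destruct (excluded_middle_informative (le t u)) as [e|e] in Hu; [tauto|].
      destruct (excluded_middle_informative (le t t)) as [e'|e'] in Htt; [|apply e'; apply le_refl'].
      subst i; destruct b; congruence.
    + destruct excluded_middle_informative as [H2|H2]; [|exfalso; eauto].
      destruct constructive_indefinite_description as [[i' t'] Hp]. simpl.
      destruct Hp as (Hi'&Hmin'&Hge'&Hlt'). simpl in *.
      assert (t' = t).
      { destruct (classic (t' = t)) as [E|E]; auto. exfalso.
        destruct (le_total t t') as [Htt|Htt].
        - pose proof (Hlt' t (conj Htt (fun e => E (eq_sym e)))).
          destruct excluded_middle_informative; [|apply n; apply le_refl'].
          destruct b; discriminate.
        - pose proof (Hge' t' (le_refl' _)).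
          destruct excluded_middle_informative. apply E, le_antisym; auto.
          destruct Hi'; congruence. }
      subst t'. pose proof (Hge' t (le_refl' _)).
      destruct excluded_middle_informative; [|exfalso; apply n; apply le_refl'].
      destruct b; subst; reflexivity.
Qed.
End TSide.
Fixpoint evalG {A : Type} (imp : A -> A -> A) (bt : A) (rho : nat -> A) (t : formula) : A :=
  match t with
  | Var n => rho n
  | Bot => bt
  | Imp a b => imp (evalG imp bt rho a) (evalG imp bt rho b)
  end.
Fixpoint subst (s : nat -> formula) (t : formula) : formula :=
  match t with
  | Var n => s n
  | Bot => Bot
  | Imp a b => Imp (subst s a) (subst s b)
  end.

Lemma evalG_comm {A B : Type} (W : A -> Prop) (f : A -> B) impA btA impB btB rho t :
  (forall x y, W x -> W y -> W (impA x y)) -> W btA -> (forall n, W (rho n)) -> f btA = btB ->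
  (forall x y, W x -> W y -> f (impA x y) = impB (f x) (f y)) ->
  W (evalG impA btA rho t) /\ f (evalG impA btA rho t) = evalG impB btB (fun n => f (rho n)) t.
Proof.
  intros H1 H2 H3 H4 H5. induction t; simpl; auto.
  destruct IHt1, IHt2. split; auto. rewrite H5; auto. congruence.
Qed.

Definition X0 := Var O. Definition X1 := Var 1%nat. Definition X2 := Var 2%nat.
Definition templates : list formula :=
  [ Imp (Imp X0 X1) (Imp (Imp X1 X2) (Imp X0 X2));
    Imp (SConj X0 X1) X0;
    Imp (SConj X0 X1) (SConj X1 X0);
    Imp (WConj X0 X1) X0;
    Imp (WConj X0 X1) (WConj X1 X0);
    Imp (SConj X0 (Imp X0 X1)) (WConj X1 X0);
    Imp (Imp X0 (Imp X1 X2)) (Imp (SConj X0 X1) X2);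
    Imp (Imp (SConj X0 X1) X2) (Imp X0 (Imp X1 X2));
    Imp (Imp (Imp X0 X1) X2) (Imp (Imp (Imp X1 X0) X2) X2);
    Imp Bot X0;
    Imp (Neg (Neg X0)) X0;
    Disj (Neg (SConj X0 X1)) (Imp (WConj X0 X1) (SConj X0 X1)) ].

Definition sig3 {A} (p q r : A) (n : nat) : A := match n with O => p | S O => q | _ => r end.

Lemma ax_template f : NM_axiom f -> exists t p q r, In t templates /\ f = subst (sig3 p q r) t.
Proof.
  intros H; destruct H;
  [ exists (nth O templates Bot), p, q, r
  | exists (nth 1%nat templates Bot), p, q, p
  | exists (nth 2%nat templates Bot), p, q, p
  | exists (nth 3%nat templates Bot), p, q, p
  | exists (nth 4%nat templates Bot), p, q, p
  | exists (nth 5%nat templates Bot), p, q, p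
  | exists (nth 6%nat templates Bot), p, q, r
  | exists (nth 7%nat templates Bot), p, q, r
  | exists (nth 8%nat templates Bot), p, q, r
  | exists (nth 9%nat templates Bot), p, p, p
  | exists (nth 10%nat templates Bot), p, p, p
  | exists (nth 11%nat templates Bot), p, q, p ];
  (split; [simpl; tauto|reflexivity]).
Qed.

Fixpoint zrange (k : nat) (M : Z) : list Z :=
  match k with O => [] | S k => (M - Z.of_nat k) :: zrange k M end.
Definition zvals (M : Z) : list Z := zrange (Z.to_nat (2 * M + 1)) M.

Definition checkM (M : Z) : bool :=
  forallb (fun t =>
    forallb (fun a => forallb (fun b => forallb (fun c =>
      Z.eqb (evalG (impZ M) (- M) (sig3 a b c) t) M) (zvals M)) (zvals M)) (zvals M)) templates.

Lemma check_all : forallb checkM [0;1;2;3;4;5;6;7;8] = true.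
Proof. vm_compute. reflexivity. Qed.
Section Sound.
Variable T : Type.
Variable le : T -> T -> Prop.
Hypothesis Hflow : temporal_flow le.

Lemma leT'_refl a : leT' le a a. Proof. destruct a; simpl; auto. apply (le_refl' _ _ Hflow). Qed.
Lemma leT'_trans a b c : leT' le a b -> leT' le b c -> leT' le a c.
Proof. destruct a, b, c; simpl; auto; try tauto. apply (le_trans' _ _ Hflow). Qed.
Lemma leT'_total a b : leT' le a b \/ leT' le b a.
Proof. destruct a, b; simpl; auto. apply (le_total _ _ Hflow). Qed.
Lemma leT'_anti a b : leT' le a b -> leT' le b a -> a = b.
Proof. destruct a, b; simpl; try tauto. intros; f_equal; apply (le_antisym _ _ Hflow); auto. Qed.

Ltac t2cases x := destruct x as [[?|] [|]|].
Lemma lr x : le x x. Proof. apply (le_refl' _ _ Hflow). Qed.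
Lemma lt' x y z : le x y -> le y z -> le x z. Proof. apply (le_trans' _ _ Hflow). Qed.
Lemma ltot x y : le x y \/ le y x. Proof. apply (le_total _ _ Hflow). Qed.
Lemma lan x y : le x y -> le y x -> x = y. Proof. apply (le_antisym _ _ Hflow). Qed.

Lemma leT2_refl x : leT2 le x x.
Proof. t2cases x; simpl; auto; apply lr. Qed.
Lemma leT2_trans x y z : leT2 le x y -> leT2 le y z -> leT2 le x z.
Proof. t2cases x; t2cases y; t2cases z; simpl; auto; try tauto; intros; eapply lt'; eauto. Qed.
Lemma leT2_total x y : leT2 le x y \/ leT2 le y x.
Proof. t2cases x; t2cases y; simpl; auto; apply ltot. Qed.
Lemma leT2_anti x y : leT2 le x y -> leT2 le y x -> x = y.
Proof.
  t2cases x; t2cases y; simpl; try tauto; intros;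
  try reflexivity; f_equal; f_equal; apply lan; auto.
Qed.
Lemma neg_anti (x y : T2 T) : leT2 le x y -> leT2 le (negT2 y) (negT2 x).
Proof. t2cases x; t2cases y; simpl; auto. Qed.
Lemma negneg (x : T2 T) : negT2 (negT2 x) = x.
Proof. t2cases x; simpl; auto; rewrite Bool.negb_involutive; auto. Qed.
Lemma le_topT2 x : leT2 le x topT2. Proof. t2cases x; simpl; auto. Qed.

Lemma sv_subst v s t : sv le v (subst s t) = evalG (impT2 T le) botT2 (fun n => sv le v (s n)) t.
Proof. induction t; try reflexivity. cbn [subst evalG]. rewrite sv_imp, IHt1, IHt2. reflexivity. Qed.

Lemma impT2_cases x y : impT2 T le x y = topT2 \/ impT2 T le x y = negT2 x \/ impT2 T le x y = y.
Proof.
  unfold impT2, maxT2. destruct excluded_middle_informative; auto.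
  destruct excluded_middle_informative; auto.
Qed.

Section Rho.
Variable Wl : list (T2 T).
Hypothesis Wneg : forall x, In x Wl -> In (negT2 x) Wl.
Hypothesis Wtop : In topT2 Wl.
Definition lebT (w x : T2 T) : bool := if excluded_middle_informative (leT2 le w x) then true else false.
Definition cntT (x : T2 T) : Z := Z.of_nat (length (filter (fun w => lebT w x) Wl)).
Definition rho (x : T2 T) : Z := cntT x - cntT (negT2 x).

Lemma filter_mono' {A} (f g : A -> bool) l :
  (forall y, f y = true -> g y = true) -> (length (filter f l) <= length (filter g l))%nat.
Proof.
  intros H; induction l; simpl; auto.
  destruct (f a) eqn:E1; [rewrite (H _ E1); simpl; lia|destruct (g a); simpl; lia].
Qed.
Lemma filter_strict' {A} (f g : A -> bool) l y :
  (forall y, f y = true -> g y = true) -> In y l -> g y = true -> f y = false ->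
  (length (filter f l) < length (filter g l))%nat.
Proof.
  intros H Hy Hg Hf; induction l; simpl; [destruct Hy|].
  destruct Hy as [<-|Hy].
  - rewrite Hf, Hg; simpl. pose proof (filter_mono' f g l H). lia.
  - destruct (f a) eqn:E1; [rewrite (H _ E1); simpl; specialize (IHl Hy); lia|].
    destruct (g a); simpl; specialize (IHl Hy); lia.
Qed.
Lemma lebT_true w x : lebT w x = true <-> leT2 le w x.
Proof. unfold lebT; destruct excluded_middle_informative; split; auto; discriminate. Qed.
Lemma cnt_mono x y : leT2 le x y -> cntT x <= cntT y.
Proof.
  intros H; unfold cntT. apply inj_le, filter_mono'. intros w Hw.
  apply lebT_true in Hw; apply lebT_true; eapply leT2_trans; eauto.
Qed.
Lemma rho_mono x y : leT2 le x y -> rho x <= rho y.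
Proof. intros H; unfold rho. pose proof (cnt_mono _ _ H). pose proof (cnt_mono _ _ (neg_anti _ _ H)). lia. Qed.
Lemma rho_strict x y : In x Wl -> ~ leT2 le x y -> rho y < rho x.
Proof.
  intros Hx H. assert (Hyx : leT2 le y x) by (destruct (leT2_total x y); tauto).
  unfold rho. pose proof (cnt_mono _ _ (neg_anti _ _ Hyx)).
  assert (cntT y < cntT x).
  { unfold cntT. apply inj_lt. apply (filter_strict' _ _ _ x).
    - intros w Hw. apply lebT_true in Hw; apply lebT_true; eapply leT2_trans; eauto.
    - exact Hx.
    - apply lebT_true, leT2_refl.
    - destruct (lebT x y) eqn:E; auto. apply lebT_true in E; contradiction. }
  lia.
Qed.
Lemma rho_le x y : In x Wl -> (leT2 le x y <-> rho x <= rho y).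
Proof.
  intros Hx; split. apply rho_mono. intros H. destruct (classic (leT2 le x y)); auto.
  pose proof (rho_strict _ _ Hx H0). lia.
Qed.
Lemma rho_neg x : rho (negT2 x) = - rho x.
Proof. unfold rho. rewrite negneg. lia. Qed.
Definition MT := rho topT2.
Lemma rho_imp x y : In x Wl -> rho (impT2 T le x y) = impZ MT (rho x) (rho y).
Proof.
  intros Hx. unfold impT2, impZ, maxT2.
  destruct excluded_middle_informative as [H|H].
  - rewrite (proj2 (Z.leb_le _ _) (rho_mono _ _ H)). reflexivity.
  - pose proof (rho_strict _ _ Hx H). rewrite (proj2 (Z.leb_gt _ _) H0).
    destruct excluded_middle_informative as [H1|H1].
    + pose proof (rho_mono _ _ H1). rewrite rho_neg in H2. lia.
    + pose proof (rho_strict _ _ (Wneg _ Hx) H1). rewrite rho_neg in *. lia.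
Qed.
Lemma rho_range x : - MT <= rho x <= MT.
Proof.
  unfold MT. pose proof (rho_mono _ _ (le_topT2 x)). pose proof (rho_mono _ _ (le_topT2 (negT2 x))).
  rewrite rho_neg in H0. lia.
Qed.
Lemma MT_bound : 0 <= MT <= Z.of_nat (length Wl).
Proof.
  pose proof (rho_range topT2). unfold MT, rho, cntT in *.
  pose proof (filter_length_le (fun w => lebT w topT2) Wl). split; lia.
Qed.
End Rho.

Lemma evalG_ext {A} imp (bt : A) r1 r2 t : (forall n, r1 n = r2 n) -> evalG imp bt r1 t = evalG imp bt r2 t.
Proof. intros H; induction t; simpl; auto; congruence. Qed.

Lemma zrange_in k M z : M - Z.of_nat k < z <= M -> In z (zrange k M).
Proof.
  induction k; simpl; intros H. lia.
  destruct (Z.eq_dec z (M - Z.of_nat k)); [left; lia|right; apply IHk; lia].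
Qed.
Lemma zvals_in M z : 0 <= M -> -M <= z <= M -> In z (zvals M).
Proof. intros H1 H2. unfold zvals. apply zrange_in. rewrite Z2Nat.id; lia. Qed.

Lemma ax_valid v f : NM_axiom f -> sv le v f = topT2.
Proof.
  intros H. destruct (ax_template f H) as [t [p [q [r [Ht ->]]]]].
  rewrite sv_subst.
  set (sp := sv le v p). set (sq := sv le v q). set (sr := sv le v r).
  set (Wl := [sp;sq;sr;negT2 sp;negT2 sq;negT2 sr;topT2;botT2]).
  assert (Wneg : forall x, In x Wl -> In (negT2 x) Wl).
  { intros x Hx. unfold Wl in *. simpl in Hx.
    destruct Hx as [<-|[<-|[<-|[<-|[<-|[<-|[<-|[<-|[]]]]]]]]]; rewrite ?negneg; simpl; tauto. }
  assert (Wtop : In topT2 Wl) by (unfold Wl; simpl; tauto).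
  assert (Hr : forall n, In (sv le v (sig3 p q r n)) Wl).
  { intros [|[|n]]; unfold Wl; simpl; tauto. }
  destruct (evalG_comm (fun x => In x Wl) (rho Wl) (impT2 T le) botT2 (impZ (MT Wl)) (- MT Wl)
     (fun n => sv le v (sig3 p q r n)) t) as [HW HE].
  - intros x y Hx Hy. destruct (impT2_cases x y) as [E|[E|E]]; rewrite E; auto.
  - unfold Wl; simpl; tauto.
  - exact Hr.
  - change botT2 with (@negT2 T topT2). rewrite rho_neg. reflexivity.
  - intros x y Hx Hy. apply rho_imp; auto.
  - set (val := evalG (impT2 T le) botT2 (fun n => sv le v (sig3 p q r n)) t) in *.
    rewrite (evalG_ext _ _ _ (sig3 (rho Wl sp) (rho Wl sq) (rho Wl sr))) in HE
      by (intros [|[|n]]; reflexivity).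
    pose proof (MT_bound Wl) as HB. simpl in HB.
    assert (HC : checkM (MT Wl) = true).
    { pose proof check_all as C. rewrite forallb_forall in C. apply C.
      assert (MT Wl = 0 \/ MT Wl = 1 \/ MT Wl = 2 \/ MT Wl = 3 \/ MT Wl = 4 \/ MT Wl = 5 \/ MT Wl = 6
        \/ MT Wl = 7 \/ MT Wl = 8) as HM by lia.
      simpl. repeat destruct HM as [HM|HM]; rewrite HM; tauto. }
    unfold checkM in HC. rewrite forallb_forall in HC. specialize (HC t Ht).
    rewrite forallb_forall in HC. specialize (HC (rho Wl sp) (zvals_in _ _ (proj1 HB) (rho_range _ _))).
    rewrite forallb_forall in HC. specialize (HC (rho Wl sq) (zvals_in _ _ (proj1 HB) (rho_range _ _))).
    rewrite forallb_forall in HC. specialize (HC (rho Wl sr) (zvals_in _ _ (proj1 HB) (rho_range _ _))).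
    apply Z.eqb_eq in HC. rewrite <- HE in HC.
    apply leT2_anti. apply le_topT2. apply (proj2 (rho_le Wl topT2 val Wtop)). unfold MT in HC. lia.
Qed.

Lemma soundness Gamma f : NM_derives Gamma f -> models le Gamma f.
Proof.
  intros H v Hv HG. induction H as [f Hf|f Hf|a b _ IH1 _ IH2].
  - apply ax_valid, Hf.
  - apply HG, Hf.
  - rewrite sv_imp, IH1 in IH2. unfold impT2 in IH2.
    destruct excluded_middle_informative as [H|H] in IH2.
    + apply leT2_anti; auto. apply le_topT2.
    + unfold maxT2 in IH2. destruct excluded_middle_informative in IH2; auto. discriminate.
Qed.
End Sound.
Definition pairs_of (f : formula) : list (formula * formula) :=
  match f with
  | Imp a b => [(a, b); (a, Imp a b);
                (Neg (SConj a (Imp a b)), Imp (WConj a (Imp a b)) (SConj a (Imp a b)))]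
  | _ => []
  end.
Definition Bset (Gamma : list formula) (phi : formula) : list formula :=
  Top :: Bot :: flat_map subf (phi :: Gamma).

Lemma subf_self f : In f (subf f). Proof. destruct f; simpl; auto. Qed.

Lemma B_closed G p a b : In (Imp a b) (Bset G p) -> In a (Bset G p) /\ In b (Bset G p).
Proof.
  unfold Bset. intros [E|[E|H]].
  - inversion E; subst. simpl; auto.
  - discriminate.
  - apply in_flat_map in H. destruct H as [f [Hf Hs]].
    destruct (subf_closed _ _ _ Hs). split; right; right; apply in_flat_map; eauto.
Qed.

Lemma completeness (T : Type) (le : T -> T -> Prop) (Hflow : temporal_flow le) Gamma phi :
  models le Gamma phi -> NM_derives Gamma phi.
Proof.
  intros Hm. apply NNPP; intros Hn.
  set (B := Bset Gamma phi). set (L := flat_map pairs_of B).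
  destruct (prime_ext L Gamma phi Hn) as [C [HC HP]].
  set (D0 := Gamma ++ C) in *.
  assert (HTB : In Top B) by (unfold B, Bset; simpl; auto).
  set (M := MM D0 B).
  assert (HM : 0 < M).
  { pose proof (vv_le_M D0 B Bot) as H1. pose proof (vv_ge_M D0 B Bot) as H2. rewrite vv_bot in H1, H2.
    fold M in H1, H2. destruct (Z.eq_dec M 0) as [E|E]; [|lia].
    exfalso. apply HC. eapply d_mp. apply (vv_top_D D0 B Bot HTB). rewrite vv_bot; fold M; lia.
    apply d_ax, ax10. }
  destruct (g_exists T le Hflow (Z.to_nat (2 * M))) as [g Hg].
  set (alpha := fun x => realize T le (phiZ T g M (vv D0 B (Var x)))).
  assert (Hrange : forall f, - M <= vv D0 B f <= M).
  { intros f. split. apply vv_ge_M. apply vv_le_M. }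
  assert (Hal : forall x, admissible le (alpha x) /\ d le (alpha x) = phiZ T g M (vv D0 B (Var x))).
  { intros x. apply realize_ok. exact Hflow. eapply phi_good; eauto. }
  assert (Key : forall f, (forall s, In s (subf f) -> In s B) -> sv le alpha f = phiZ T g M (vv D0 B f)).
  { induction f as [x| |a IHa b IHb]; intros Hs.
    - apply Hal.
    - simpl. rewrite vv_bot. fold M. symmetry. eapply phi_mM; eauto.
    - rewrite sv_imp. rewrite IHa, IHb.
      2: { intros s Hs'; apply Hs; simpl; right; apply in_or_app; auto. }
      2: { intros s Hs'; apply Hs; simpl; right; apply in_or_app; auto. }
      rewrite (phi_imp T le Hflow g M HM Hg); auto.
      assert (HI : In (Imp a b) B) by (apply Hs; simpl; auto).
      assert (HP' : forall p q, In (p, q) (pairs_of (Imp a b)) -> LE D0 p q \/ LE D0 q p).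
      { intros p q Hpq. apply HP. unfold L. apply in_flat_map. eauto. }
      f_equal. symmetry. apply vv_imp.
      + apply (B_closed Gamma phi a b HI).
      + apply HP'. simpl; auto.
      + apply HP'. simpl; auto.
      + apply HP'. simpl; auto. }
  assert (HsubB : forall f, In f (phi :: Gamma) -> forall s, In s (subf f) -> In s B).
  { intros f Hf s Hs. unfold B, Bset. right; right. apply in_flat_map; eauto. }
  assert (Hphi : sv le alpha phi = topT2).
  { apply Hm.
    - intros x; apply Hal.
    - intros psi Hpsi. rewrite Key by (apply HsubB; simpl; auto).
      rewrite (D_vv_top D0 B psi). fold M. eapply phi_M.
      apply d_hyp. unfold D0. apply in_or_app; auto. }
  rewrite Key in Hphi by (apply HsubB; simpl; auto).
  apply (phi_top T g M) in Hphi; auto.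
  apply HC. apply (vv_top_D D0 B phi HTB). exact Hphi.
Qed.

Theorem mainTheorem7 (T : Type) (le : T -> T -> Prop) (Hflow : temporal_flow le)
  (Gamma : list formula) (phi : formula) :
  NM_derives Gamma phi <-> models le Gamma phi.
Proof.
  split. apply soundness; auto. apply completeness; auto.
Qed.
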